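(* Let $A$ be a compact Hausdorff topological algebra. Then $A$ is simple if and only if $\Delta_A=\{(a,a)\mid a\in A\}$ and $A\times A$ are the only closed congruences on $A$.
   Context: A topological algebra is an algebra (a set with finitary operations of a fixed type) equipped with a topology such that every operation is continuous. A congruence on $A$ is an equivalence relation on $A$ that is a subalgebra of $A\times A$; it is closed if it is closed in the product space $A\times A$. A Hausdorff topological algebra $A$ is called simple if every non-constant continuous homomorphism from $A$ into any Hausdorff topological algebra of the same type is injective. *)

(* Defs.v *)
From HB Require Import structures.
From mathcomp Require Import all_boot all_order all_algebra.
From mathcomp Require Import all_classical all_reals all_analysis.
Set Implicit Arguments. Unset Strict Implicit. Unset Printing Implicit Defensive.
Local Open Scope classical_set_scope.

(* A type (signature): operation symbols F with arities ar : F -> nat.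
   An algebra of this type on carrier A: for each f, an operation
   ops f : A^(ar f) -> A, where A^(ar f) = 'I_(ar f) -> A carries the
   product topology ({ptws _ -> _}). *)
Definition operations (F : Type) (ar : F -> nat) (A : Type) :=
  forall f : F, {ptws 'I_(ar f) -> A} -> A.

Definition continuous_ops (F : Type) (ar : F -> nat) (A : topologicalType)
  (opsA : operations ar A) : Prop :=
  forall f : F, continuous (opsA f).

Definition homomorphism (F : Type) (ar : F -> nat) (A B : Type)
  (opsA : operations ar A) (opsB : operations ar B) (h : A -> B) : Prop :=
  forall (f : F) (x : 'I_(ar f) -> A), h (opsA f x) = opsB f (fun i => h (x i)).

Definition simple_talg (F : Type) (ar : F -> nat) (A : topologicalType)
  (opsA : operations ar A) : Prop :=
  forall (B : topologicalType) (opsB : operations ar B),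
    continuous_ops opsB -> hausdorff_space B ->
    forall h : A -> B, continuous h -> homomorphism opsA opsB h ->
      (exists a b : A, h a <> h b) -> injective h.

Definition congruence (F : Type) (ar : F -> nat) (A : Type)
  (opsA : operations ar A) (R : set (A * A)) : Prop :=
  [/\ (forall a, R (a, a)),
      (forall a b, R (a, b) -> R (b, a)),
      (forall a b c, R (a, b) -> R (b, c) -> R (a, c)) &
      (forall (f : F) (x y : 'I_(ar f) -> A),
          (forall i, R (x i, y i)) -> R (opsA f x, opsA f y))].

Definition diag_rel (A : Type) : set (A * A) := [set p | p.1 = p.2].
Arguments diag_rel A : clear implicits.

(* Main.v *)
From HB Require Import structures.
Require Import Defs.
From mathcomp Require Import all_boot all_order all_algebra.
From mathcomp Require Import all_classical all_reals all_analysis.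
Unset Printing Implicit Defensive.
Local Open Scope classical_set_scope.

Lemma prod_cont_into (T V : topologicalType) (I : Type)
  (g : T -> {ptws I -> V}) :
  (forall i, continuous (fun x => g x i)) -> continuous g.
Proof.
move=> gc x; apply/cvg_sup.
move=> i; move: x; apply/(@continuousP _ (initial_topology (@^~ i))) => A [B oB <-].
have -> : g @^-1` ((@^~ i) @^-1` B) = (fun x => g x i) @^-1` B by [].
by move/continuousP: (gc i); apply.
Qed.

Definition Kc (A : Type) (R : set (A * A)) (a : A) : set A := [set b | R (a, b)].
Arguments Kc {A}.

Record qT (A : topologicalType) (R : set (A * A)) :=
  MkQ { qval : set A; qprop : exists a, qval = Kc R a }.
Arguments qT {A}.
Arguments qval {A R}.
Arguments qprop {A R}.

HB.instance Definition _ (A : topologicalType) (R : set (A * A)) := gen_eqMixin (qT R).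
HB.instance Definition _ (A : topologicalType) (R : set (A * A)) := gen_choiceMixin (qT R).

Definition qmap (A : topologicalType) (R : set (A * A)) (a : A) : qT R :=
  @MkQ A R (Kc R a) (ex_intro _ a erefl).
Arguments qmap {A}.

Definition qopen (A : topologicalType) (R : set (A * A)) (U : set (qT R)) :=
  open (qmap R @^-1` U).
Arguments qopen {A}.

Program Definition qT_mixin (A : topologicalType) (R : set (A * A)) :=
  @isOpenTopological.Build (qT R) (@qopen A R) _ _ _.
Next Obligation. by move=> A R; rewrite /qopen preimage_setT; exact: openT. Qed.
Next Obligation. by move=> A R ? ? ? ?; exact: openI. Qed.
Next Obligation. by move=> A R I f ofi; rewrite /qopen preimage_bigcup; apply: bigcup_open => i _; exact: ofi. Qed.
HB.instance Definition _ (A : topologicalType) (R : set (A * A)) := qT_mixin A R.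

Lemma qopenE (A : topologicalType) (R : set (A * A)) (U : set (qT R)) :
  open U = open (qmap R @^-1` U).
Proof. by []. Qed.

Lemma qT_eq (A : topologicalType) (R : set (A * A)) (y z : qT R) :
  qval y = qval z -> y = z.
Proof.
case: y => vy py; case: z => vz pz /= e; subst vz.
by rewrite (Prop_irrelevance py pz).
Qed.

Section Quot.
Variables (F : Type) (ar : F -> nat) (A : topologicalType)
  (opsA : operations ar A) (hcont : continuous_ops opsA)
  (hHaus : hausdorff_space A) (hcpt : compact [set: A])
  (R : set (A * A)) (hR : congruence opsA R) (hRc : closed R).

Let Rrefl : forall a, R (a, a). Proof. by case: hR. Qed.
Let Rsym : forall {a b : A}, R (a, b) -> R (b, a). Proof. by case: hR. Qed.
Let Rtrans : forall {a b c : A}, R (a, b) -> R (b, c) -> R (a, c). Proof. by case: hR. Qed.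
Let Rops : forall (f : F) (x y : 'I_(ar f) -> A),
  (forall i, R (x i, y i)) -> R (opsA f x, opsA f y). Proof. by case: hR. Qed.

Lemma qmapP a b : qmap R a = qmap R b <-> R (a, b).
Proof.
split.
  move=> /(congr1 qval) /= e.
  have : Kc R b b by exact: Rrefl.
  by rewrite -e.
move=> Rab; apply: qT_eq => /=; apply/seteqP; rewrite /Kc; split => c /=.
  by move=> Rac; apply: Rtrans (Rsym Rab) Rac.
by move=> Rbc; apply: Rtrans Rab Rbc.
Qed.

Definition qrep (y : qT R) : A := projT1 (cid (qprop y)).

Lemma qrepK y : qmap R (qrep y) = y.
Proof.
apply: qT_eq => /=; rewrite /qrep; case: (cid (qprop y)) => a /= e.
by rewrite e.
Qed.

Lemma qmap_cont : continuous (qmap R).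
Proof. by apply/continuousP => U; rewrite qopenE. Qed.

Definition sat (C : set A) := [set b | exists2 c, C c & R (c, b)].

Lemma snd_cont : continuous (@snd A A).
Proof. by move=> p; exact: cvg_snd. Qed.

Lemma sat_closed C : closed C -> closed (sat C).
Proof.
move=> cC.
have -> : sat C = snd @` ((C `*` [set: A]) `&` R).
  apply/seteqP; split => b.
    by case=> c Cc Rcb; exists (c, b).
  by case=> -[c b'] /= [[Cc _] Rcb] <-; exists c.
apply: compact_closed => //; apply: continuous_compact.
  exact: continuous_subspaceT snd_cont.
apply: compact_closedI => //; apply: compact_setX => //.
by rewrite -[C]setTI; apply: compact_closedI.
Qed.

Lemma Kc_closed a : closed (Kc R a).
Proof.
have -> : Kc R a = sat [set a].
  apply/seteqP; split => b /=; first by move=> ?; exists a.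
  by case=> c -> .
apply: sat_closed; apply: compact_closed => //; exact: compact_set1.
Qed.

Lemma inner_open U : open U -> open [set a | Kc R a `<=` U].
Proof.
move=> oU.
have -> : [set a | Kc R a `<=` U] = ~` sat (~` U).
  apply/seteqP; split => a /=.
    by move=> sub [c nUc Rca]; apply: nUc; apply: sub; exact: Rsym.
  move=> nsat b Rab; apply: contrapT => nUb; apply: nsat.
  by exists b => //; exact: Rsym.
rewrite openC; apply: sat_closed; by rewrite closedC.
Qed.

Lemma qHaus : hausdorff_space (qT R).
Proof.
rewrite open_hausdorff => y z yz.
rewrite -(qrepK y) -(qrepK z) in yz *.
set a := qrep y in yz *; set b := qrep z in yz *.
have nRab : ~ R (a, b) by move=> /qmapP e; move/eqP: yz; apply.
have nrm := compact_normal hHaus hcpt.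
have cKb := Kc_closed b.
have : set_nbhs (Kc R a) (~` Kc R b).
  apply/set_nbhsP; exists (~` Kc R b); split => //.
    by rewrite openC.
  by move=> c Rac Rbc; apply: nRab; apply: Rtrans Rac (Rsym Rbc).
move=> /(nrm _ (Kc_closed a)) [W /set_nbhsP [U [oU KaU UW]] clW].
exists ([set w | qval w `<=` U], [set w | qval w `<=` ~` closure W]) => /=.
  split; rewrite inE /=; first exact: KaU.
  by move=> c Rbc /clW; apply.
split.
- by rewrite qopenE; apply: inner_open.
- rewrite qopenE; apply: inner_open; rewrite openC; exact: closed_closure.
- apply/eqP; apply/seteqP; split => // w [wU wV].
  rewrite -(qrepK w) in wU wV.
  have hc : Kc R (qrep w) (qrep w) by exact: Rrefl.
  by apply: (wV _ hc); apply: subset_closure; apply: UW; apply: wU.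
Qed.

Definition opsB : operations ar (qT R) :=
  fun f y => qmap R (opsA f (fun i => qrep (y i))).

Lemma opsB_hom : homomorphism opsA opsB (qmap R).
Proof.
move=> f x; rewrite /opsB; apply/qmapP; apply: Rops => i.
have := qrepK (qmap R (x i)) => /qmapP; exact: Rsym.
Qed.

Lemma opsB_cont : continuous_ops opsB.
Proof.
move=> f; apply/continuous_closedP => S cS.
pose Q := fun x : {ptws 'I_(ar f) -> A} =>
  ((fun i => qmap R (x i)) : {ptws 'I_(ar f) -> qT R}).
pose C := opsA f @^-1` (qmap R @^-1` S).
have -> : opsB f @^-1` S = Q @` C.
  apply/seteqP; split => y.
    move=> Sy; exists (fun i => qrep (y i)) => //.
    by apply: functional_extensionality_dep => i; rewrite /Q qrepK.
  by case=> x Cx <-; rewrite /= -opsB_hom.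
apply: compact_closed; first by apply: hausdorff_product => _; exact: qHaus.
apply: continuous_compact.
  apply: continuous_subspaceT; apply: prod_cont_into => i.
  move=> x; apply: (@continuous_comp _ _ _ (fun y : {ptws 'I_(ar f) -> A} => y i) (qmap R)).
    exact: (@proj_continuous 'I_(ar f) (fun _ => A) i).
  exact: qmap_cont.
have cC : closed C.
  move/continuous_closedP: (hcont f); apply.
  by move/continuous_closedP: qmap_cont; apply.
rewrite -[C]setTI; apply: compact_closedI => //.
have := @tychonoff 'I_(ar f) (fun _ => A) (fun _ => [set: A]) (fun _ => hcpt).
have -> : [set f0 : forall i : 'I_(ar f), A | forall i, [set: A] (f0 i)] = [set: _].
  by apply/seteqP; split.
by [].
Qed.

End Quot.

Lemma hom_kernel_closed (A B : topologicalType) (h : A -> B) :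
  continuous h -> hausdorff_space B ->
  closed [set p : A * A | h p.1 = h p.2].
Proof.
move=> hc hB; rewrite -openC openE => -[p q] /= npq.
move: hB; rewrite open_hausdorff => /(_ (h p) (h q)).
have /[swap]/[apply] : h p != h q by apply/eqP.
case=> -[U V] /=; rewrite !inE => -[Up Vq] [oU oV /eqP UV0].
exists (h @^-1` U, h @^-1` V); first split => /=.
- by apply: hc; apply: open_nbhs_nbhs; split.
- by apply: hc; apply: open_nbhs_nbhs; split.
move=> -[x y] /= [Ux Vy] e; rewrite e in Ux.
by move/eqP: UV0 => UV0; have : (U `&` V) (h y) by []; rewrite UV0.
Qed.

Theorem proposition4p1 (F : Type) (ar : F -> nat) (A : topologicalType)
  (opsA : operations ar A) (hcont : continuous_ops opsA)
  (hHaus : hausdorff_space A) (hcpt : compact [set: A]) :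
  simple_talg opsA <->
  (forall R : set (A * A), congruence opsA R -> closed R ->
     R = diag_rel A \/ R = [set: A * A]).
Proof.
split.
  move=> hs R hR hRc.
  have [Rrefl _ _ _] := hR.
  have [->|nd] := pselect (R = diag_rel A); first by left.
  right; apply/seteqP; split => // -[a b] _; apply: contrapT => nRab.
  apply: nd.
  have inj : injective (qmap R).
    apply: (hs _ (opsB _ _ _ opsA R) (opsB_cont _ _ _ _ hcont hHaus hcpt R hR hRc)
      (qHaus _ _ _ _ hHaus hcpt R hR hRc)).
    - exact: qmap_cont.
    - exact: opsB_hom.
    - by exists a, b => /(qmapP _ _ _ _ _ hR).
  apply/seteqP; split => -[c d] /=.
    by move=> Rcd; rewrite /diag_rel /=; apply: inj; apply/(qmapP _ _ _ _ _ hR).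
  by rewrite /diag_rel /= => ->.
move=> hR B opsB hcB hB h hc hh [a [b nab]] x y hxy.
have cong : congruence opsA [set p : A * A | h p.1 = h p.2].
  split => //=.
  - by move=> ? ? ? -> ->.
  - move=> f u v huv; rewrite !hh; congr (opsB f _).
    by apply: functional_extensionality_dep => i; apply: huv.
case: (hR _ cong (hom_kernel_closed _ _ h hc hB)) => e.
  by have : [set p : A * A | h p.1 = h p.2] (x, y) by []; rewrite e.
by exfalso; apply: nab; have : [set p : A * A | h p.1 = h p.2] (a, b) by rewrite e.
Qed.
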